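(* Assume $A\ge\varepsilon^2/16$. Let $\phi^0\in\mathcal{G}_N$ and define $\phi^{-1}=\phi^0-\Delta t\,\Delta_N\mu^0$ with $\mu^0=-\nabla_N\cdot(|\nabla_N\phi^0|^2\nabla_N\phi^0)+a\phi^0+2\Delta_N\phi^0+\Delta_N^2\phi^0$. Let $(\phi^m)_{m\ge1}$ be generated by the scheme \[ \frac{\frac32\phi^{k+1}-2\phi^k+\frac12\phi^{k-1}}{\Delta t}=\Delta_N\mu_i^{k+1},\quad k\ge0, \] with $i=1$ or $i=2$, where \[ \mu_1^{k+1}=-\nabla_N\cdot(|\nabla_N\phi^{k+1}|^2\nabla_N\phi^{k+1})+a\phi^{k+1}+2\Delta_N(2\phi^k-\phi^{k-1})-A\Delta t\,\Delta_N(\phi^{k+1}-\phi^k)+\Delta_N^2\phi^{k+1}, \] \[ \mu_2^{k+1}=-\nabla_N\cdot(|\nabla_N\phi^{k+1}|^2\nabla_N\phi^{k+1})-\varepsilon(2\phi^k-\phi^{k-1})-A\Delta t\,\Delta_N(\phi^{k+1}-\phi^k)+(1+\Delta_N)^2\phi^{k+1}. \] Suppose that, for some constant $\tilde C_0$ independent of $h$, \[ E_N(\phi^0)+\frac{\Delta t}{4}\|\nabla_N\mu^0\|_2^2+\Delta t^2\|\nabla_N\Delta_N\mu^0\|_2^2\le\tilde C_0 \quad\text{(for } i=1\text{)}, \] \[ E_N(\phi^0)+\frac{\Delta t}{4}\|\nabla_N\mu^0\|_2^2+\frac{\varepsilon\Delta t^2}{2}\|\Delta_N\mu^0\|_2^2\le\tilde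 C_0\quad\text{(for } i=2\text{)}. \] Then $\|\phi^m\|_{H_N^2}\le\tilde C_1$ for all $m\ge1$, where $\tilde C_1>0$ depends on $\Omega$ and $\tilde C_0$ but is independent of $h$, $\Delta t$ and the final time.
   Context: Let $K\in\mathbb{N}$, $N=2K+1$, $h=1/N$, $\Omega=(0,1)^3$, grid points $(ih,jh,kh)$. $\mathcal{G}_N$ is the space of real grid functions on $\mathbb{Z}^3$ that are $N$-periodic in each index; $\langle f,g\rangle=h^3\sum_{i,j,k=0}^{N-1}f_{i,j,k}g_{i,j,k}$, $\|f\|_p=(h^3\sum|f_{i,j,k}|^p)^{1/p}$ (pointwise Euclidean norm for vector-valued grid functions). Each $f\in\mathcal{G}_N$ has discrete Fourier expansion $f_{i,j,k}=\sum_{\ell,m,n=-K}^K\hat f_{\ell,m,n}\exp(2\pi\mathrm{i}(\ell x_i+my_j+nz_k))$; $\mathcal{D}_x$ multiplies coefficients by $2\pi\mathrm{i}\ell$ (similarly $\mathcal{D}_y,\mathcal{D}_z$), $\nabla_Nf=(\mathcal{D}_xf,\mathcal{D}_yf,\mathcal{D}_zf)$, $\nabla_N\cdot(f_1,f_2,f_3)=\mathcal{D}_xf_1+\mathcal{D}_yf_2+\mathcal{D}_zf_3$, $\Delta_N$ multiplies coefficients by $-4\pi^2(\ell^2+m^2+n^2)$; nonlinear products are pointwise. $\|f\|_{H_N^2}^2=\|f\|_2^2+\|\nabla_Nf\|_2^2+\|\Delta_Nf\|_2^2$. The discrete energy is $E_N(\phi)=\frac14\|\nabla_N\phi\|_4^4+\frac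 a2\|\phi\|_2^2-\|\nabla_N\phi\|_2^2+\frac12\|\Delta_N\phi\|_2^2$. Parameters: $\Delta t>0$, $0<\varepsilon<1$, $a=1-\varepsilon>0$, $A$ a constant. *)

(* Defs.v *)
From HB Require Import structures.
From mathcomp Require Import all_boot all_order all_algebra.
From mathcomp Require Import all_classical all_reals all_analysis.
From mathcomp Require Import complex.
Set Implicit Arguments. Unset Strict Implicit. Unset Printing Implicit Defensive.
Import Order.TTheory GRing.Theory Num.Theory.
Local Open Scope ring_scope.
Local Open Scope complex_scope.

Section Spectral.
Variables (R : realType) (K : nat).

Definition Ngrid : nat := (2 * K + 1)%N.
Definition hstep : R := 1 / (Ngrid%:R).

(* a grid point / a frequency triple: indices in {0,..,N-1}^3 *)
Definition pt := ('I_Ngrid * 'I_Ngrid * 'I_Ngrid)%type.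
(* an N-periodic real grid function, represented by its values on one period *)
Definition grid := pt -> R.
Definition vgrid := (grid * grid * grid)%type.

(* frequency index j in 'I_N  <->  l = j - K in {-K,..,K} *)
Definition freq (j : 'I_Ngrid) : R := (j%:R - K%:R).

Definition phase (p q : pt) : R :=
  2 * pi * (freq q.1.1 * (p.1.1%:R * hstep)
          + freq q.1.2 * (p.1.2%:R * hstep)
          + freq q.2   * (p.2%:R * hstep)).

Definition expi (t : R) : R[i] := Complex (cos t) (sin t).

(* discrete Fourier coefficients: f_p = sum_q fhat_q exp(i phase p q) *)
Definition fhat (f : grid) (q : pt) : R[i] :=
  ((Ngrid%:R ^+ 3)^-1)%:C * \sum_(p : pt) ((f p)%:C * expi (- phase p q)).

(* Fourier multiplier with symbol sigma (result is real for the symbols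
   below; we take the real part) *)
Definition fmult (sigma : pt -> R[i]) (f : grid) : grid :=
  fun p => complex.Re (\sum_(q : pt) (sigma q * fhat f q * expi (phase p q))).

Definition Dx : grid -> grid := fmult (fun q => Complex 0 (2 * pi * freq q.1.1)).
Definition Dy : grid -> grid := fmult (fun q => Complex 0 (2 * pi * freq q.1.2)).
Definition Dz : grid -> grid := fmult (fun q => Complex 0 (2 * pi * freq q.2)).
Definition LapN : grid -> grid :=
  fmult (fun q => (- 4 * pi ^+ 2 *
     (freq q.1.1 ^+ 2 + freq q.1.2 ^+ 2 + freq q.2 ^+ 2))%:C).

Definition gradN (f : grid) : vgrid := (Dx f, Dy f, Dz f).
Definition divN (u : vgrid) : grid :=
  fun p => Dx u.1.1 p + Dy u.1.2 p + Dz u.2 p.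

Definition gadd (f g : grid) : grid := fun p => f p + g p.
Definition gsub (f g : grid) : grid := fun p => f p - g p.
Definition gscale (c : R) (f : grid) : grid := fun p => c * f p.
Definition vscale (c : grid) (u : vgrid) : vgrid :=
  (fun p => c p * u.1.1 p, fun p => c p * u.1.2 p, fun p => c p * u.2 p).
Definition vsq (u : vgrid) : grid :=
  fun p => u.1.1 p ^+ 2 + u.1.2 p ^+ 2 + u.2 p ^+ 2.

Definition nrm2sq (f : grid) : R := hstep ^+ 3 * \sum_(p : pt) f p ^+ 2.
Definition vnrm2sq (u : vgrid) : R := hstep ^+ 3 * \sum_(p : pt) vsq u p.
Definition vnrm4pow4 (u : vgrid) : R := hstep ^+ 3 * \sum_(p : pt) vsq u p ^+ 2.

Definition H2norm (f : grid) : R :=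
  Num.sqrt (nrm2sq f + vnrm2sq (gradN f) + nrm2sq (LapN f)).

Definition EN (a : R) (phi : grid) : R :=
  vnrm4pow4 (gradN phi) / 4 + a / 2 * nrm2sq phi
  - vnrm2sq (gradN phi) + nrm2sq (LapN phi) / 2.

Definition nlterm (phi : grid) : grid :=
  fun p => - divN (vscale (vsq (gradN phi)) (gradN phi)) p.

Definition mu0 (a : R) (phi0 : grid) : grid :=
  fun p => nlterm phi0 p + a * phi0 p + 2 * LapN phi0 p + LapN (LapN phi0) p.

(* mu_1^{k+1}, from (phi^{k+1}, phi^k, phi^{k-1}) *)
Definition mu1 (a A dt : R) (pn pc pp : grid) : grid :=
  fun p => nlterm pn p + a * pn p
         + 2 * LapN (fun r => 2 * pc r - pp r) p
         - A * dt * LapN (gsub pn pc) p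
         + LapN (LapN pn) p.

(* mu_2^{k+1}; (1 + Delta_N)^2 f = f + 2 Delta_N f + Delta_N^2 f *)
Definition mu2 (eps A dt : R) (pn pc pp : grid) : grid :=
  fun p => nlterm pn p - eps * (2 * pc p - pp p)
         - A * dt * LapN (gsub pn pc) p
         + (pn p + 2 * LapN pn p + LapN (LapN pn) p).

End Spectral.

(* Main.v *)
Require Import Defs.
From HB Require Import structures.
From mathcomp Require Import all_boot all_order all_algebra.
From mathcomp Require Import all_classical all_reals all_analysis.
From mathcomp Require Import complex.
From mathcomp Require Import ring lra zify.
Import Order.TTheory GRing.Theory Num.Theory.
Set Implicit Arguments. Unset Strict Implicit. Unset Printing Implicit Defensive.
Local Open Scope ring_scope.
Local Open Scope complex_scope.

Section Four.
Variables (R : realType).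

Lemma expiD (x y : R) : expi (x + y) = expi x * expi y.
Proof. rewrite /expi cosD sinD /=. congr Complex; ring. Qed.

Lemma ReM (a b c d : R) : complex.Re (Complex a b * Complex c d) = a * c - b * d.
Proof. by []. Qed.
Lemma ImM (a b c d : R) : complex.Im (Complex a b * Complex c d) = a * d + b * c.
Proof. by []. Qed.

Lemma sumC (I : finType) (a b : I -> R) :
  \sum_(i : I) Complex (a i) (b i) = Complex (\sum_i a i) (\sum_i b i).
Proof.
elim/big_rec3: _ => //= i x y z _ ->. by [].
Qed.

Lemma Re_sum (I : finType) (F : I -> R[i]) : complex.Re (\sum_i F i) = \sum_i complex.Re (F i).
Proof. by apply: (big_morph (@complex.Re R)) => [[a b] [c d]|]. Qed.
Lemma Im_sum (I : finType) (F : I -> R[i]) : complex.Im (\sum_i F i) = \sum_i complex.Im (F i).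
Proof. by apply: (big_morph (@complex.Im R)) => [[a b] [c d]|]. Qed.

Lemma ReCM (a : R) (z : R[i]) : complex.Re (a%:C * z) = a * complex.Re z.
Proof. by case: z => x y /=; ring. Qed.
Lemma ImCM (a : R) (z : R[i]) : complex.Im (a%:C * z) = a * complex.Im z.
Proof. by case: z => x y /=; ring. Qed.

Variable K : nat.
Definition Nr : R := (Ngrid K)%:R.
Definition cs (p q : pt K) : R := cos (phase R p q).
Definition sn (p q : pt K) : R := sin (phase R p q).
Definition Fc (f : grid R K) (q : pt K) : R := (Nr ^+ 3)^-1 * \sum_p f p * cs p q.
Definition Fs (f : grid R K) (q : pt K) : R := (Nr ^+ 3)^-1 * \sum_p f p * sn p q.

Lemma fhatE f q : fhat f q = Complex (Fc f q) (- Fs f q).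
Proof.
apply/eqP; rewrite eq_complex; apply/andP; split; apply/eqP.
  rewrite /fhat ReCM Re_sum /Fc /Nr; congr (_ * _); apply: eq_bigr => p _.
  by rewrite /expi cosN sinN /cs /=; ring.
rewrite /fhat ImCM Im_sum /Fs /Nr /= -mulrN -sumrN; congr (_ * _); apply: eq_bigr => p _.
by rewrite /expi cosN sinN /sn /=; ring.
Qed.

Lemma fmultE sigma f p : fmult sigma f p = \sum_q
  (complex.Re (sigma q) * (Fc f q * cs p q + Fs f q * sn p q)
   - complex.Im (sigma q) * (Fc f q * sn p q - Fs f q * cs p q)).
Proof.
rewrite /fmult Re_sum; apply: eq_bigr => q _; rewrite fhatE.
case: (sigma q) => a b; rewrite /expi /cs /sn /=; ring.
Qed.

Definition ip (f g : grid R K) : R := hstep R K ^+ 3 * \sum_p f p * g p.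

Lemma Nr_gt0 : 0 < Nr.
Proof. by rewrite /Nr ltr0n /Ngrid addn1. Qed.

Lemma h3E : hstep R K ^+ 3 = (Nr ^+ 3)^-1.
Proof. by rewrite /hstep /Nr div1r exprVn. Qed.

Lemma ipE sigma f g : ip (fmult sigma f) g = \sum_q
  (complex.Re (sigma q) * (Fc f q * Fc g q + Fs f q * Fs g q)
   - complex.Im (sigma q) * (Fc f q * Fs g q - Fs f q * Fc g q)).
Proof.
rewrite /ip.
under eq_bigr do rewrite fmultE mulr_suml.
rewrite exchange_big mulr_sumr; apply: eq_bigr => q _.
set X := complex.Re (sigma q) * Fc f q + complex.Im (sigma q) * Fs f q.
set Y := complex.Re (sigma q) * Fs f q - complex.Im (sigma q) * Fc f q.
transitivity (X * Fc g q + Y * Fs g q); last by rewrite /X /Y; ring.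
rewrite (eq_bigr (fun p => X * (g p * cs p q) + Y * (g p * sn p q))); last first.
  by move=> p _; rewrite /X /Y; ring.
rewrite [Fc g q]/Fc [Fs g q]/Fs -h3E.
rewrite big_split /= -!mulr_sumr; ring.
Qed.

Lemma expi0 : expi (0 : R) = 1.
Proof. by rewrite /expi cos0 sin0. Qed.

Lemma expiMn (x : R) n : expi (x *+ n) = expi x ^+ n.
Proof.
elim: n => [|n IH]; first by rewrite mulr0n expr0 expi0.
by rewrite mulrS expiD IH exprS.
Qed.

Lemma expiNK (x : R) : expi (- x) * expi x = 1.
Proof. by rewrite -expiD addNr expi0. Qed.

Lemma expi2pi_int (z : int) : expi (2 * pi * z%:~R : R) = 1.
Proof.
have H n : expi (2 * pi * n%:R : R) = 1.
  rewrite (_ : 2 * pi * n%:R = (pi *+ 2) *+ n); last by rewrite mulr_natr mulr_natl.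
  by rewrite expiMn /expi cos2pi sin2pi expr1n.
case: z => n; first exact: H.
rewrite NegzE intrN mulrN.
by have := expiNK (2 * pi * n.+1%:R); rewrite H mulr1.
Qed.

Lemma pin_bound n : (0 < n < Ngrid K)%N -> 0 < pi * (n%:R * hstep R K) < pi.
Proof.
move=> /andP[n0 nN].
have hN : 0 < Nr := Nr_gt0.
have hn : 0 < n%:R :> R by rewrite ltr0n.
have hnN : n%:R < Nr by rewrite /Nr ltr_nat.
rewrite /hstep -/Nr; apply/andP; split.
  by rewrite mulr_gt0 ?pi_gt0 // mulr_gt0 // divr_gt0.
rewrite -[X in _ < X]mulr1 ltr_pM2l ?pi_gt0 // mul1r.
by rewrite ltr_pdivrMr // mul1r.
Qed.

Lemma w_neq1 (z : int) : z != 0 -> (`|z| < Ngrid K)%N ->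
  expi (2 * pi * (z%:~R * hstep R K)) != 1.
Proof.
move=> z0 zN; apply/eqP => h1.
have c1 : cos (2 * pi * (z%:~R * hstep R K)) = 1 by move: h1 => [].
have st : sin (pi * (z%:~R * hstep R K)) = 0.
  have ct : cos ((pi * (z%:~R * hstep R K)) *+ 2) = 1.
    by rewrite -mulr_natr -[RHS]c1; congr cos; ring.
  move: ct; rewrite cos_mulr2n => ct.
  have := cos2Dsin2 (pi * (z%:~R * hstep R K)) => h.
  have : sin (pi * (z%:~R * hstep R K)) ^+ 2 = 0 by lra.
  by move/eqP; rewrite sqrf_eq0 => /eqP.
move: st {c1 h1}; case: z z0 zN => n z0 zN.
  have := @pin_bound n; rewrite lt0n.
  have -> : (n != 0)%N by move: z0; apply: contra => /eqP ->.
  move=> /(_ zN) h hs.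
  by have := sin_gt0_pi h; rewrite hs ltxx.
have := @pin_bound n.+1 => /(_ zN) h.
rewrite NegzE intrN mulNr mulrN sinN => /eqP; rewrite oppr_eq0 => /eqP hs.
by have := sin_gt0_pi h; rewrite hs ltxx.
Qed.

Lemma sum1D (z : int) : (`|z| < Ngrid K)%N ->
  \sum_(j < Ngrid K) expi (2 * pi * (z%:~R * (j%:R * hstep R K)))
  = if z == 0 then Nr%:C else 0.
Proof.
move=> zN; case: eqP => [->|/eqP z0].
  under eq_bigr do rewrite mul0r mulr0 expi0.
  by rewrite sumr_const card_ord /Nr rmorph_nat.
set w := expi (2 * pi * (z%:~R * hstep R K)).
have E (j : 'I_(Ngrid K)) : expi (2 * pi * (z%:~R * (j%:R * hstep R K))) = w ^+ j.
  by rewrite -expiMn; congr expi; rewrite -mulr_natr; ring.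
under eq_bigr do rewrite E.
have wN : w ^+ Ngrid K = 1.
  rewrite -expiMn -(mulr_natr _ (Ngrid K)).
  rewrite (_ : 2 * pi * (z%:~R * hstep R K) * (Ngrid K)%:R = 2 * pi * z%:~R).
    exact: expi2pi_int.
  have hN : (Ngrid K)%:R != 0 :> R by rewrite -/Nr gt_eqF // Nr_gt0.
  rewrite /hstep; field.
  exact: hN.
have := subrX1 w (Ngrid K); rewrite wN subrr => /esym /eqP.
by rewrite mulf_eq0 subr_eq0 (negbTE (@w_neq1 z z0 zN)) /= => /eqP.
Qed.

Lemma sum_pt3 (a b c : 'I_(Ngrid K) -> R[i]) :
  \sum_(p : pt K) a p.1.1 * b p.1.2 * c p.2
  = (\sum_i a i) * (\sum_j b j) * (\sum_k c k).
Proof. by rewrite big_distrlr pair_bigA big_distrlr pair_bigA. Qed.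

Lemma sum3 (z1 z2 z3 : int) : (`|z1| < Ngrid K)%N -> (`|z2| < Ngrid K)%N ->
  (`|z3| < Ngrid K)%N ->
  \sum_(p : pt K) expi (2 * pi * (z1%:~R * (p.1.1%:R * hstep R K)
     + z2%:~R * (p.1.2%:R * hstep R K) + z3%:~R * (p.2%:R * hstep R K)))
  = if [&& z1 == 0, z2 == 0 & z3 == 0] then (Nr ^+ 3)%:C else 0.
Proof.
move=> h1 h2 h3.
under eq_bigr do rewrite !(mulrDr (2 * pi)) !expiD.
rewrite (sum_pt3 (fun i => expi (2 * pi * (z1%:~R * (i%:R * hstep R K))))
  (fun i => expi (2 * pi * (z2%:~R * (i%:R * hstep R K))))
  (fun i => expi (2 * pi * (z3%:~R * (i%:R * hstep R K))))) !sum1D //.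
by case: eqP; case: eqP; case: eqP => //= *;
  apply/eqP; rewrite eq_complex /=; apply/andP; split; apply/eqP; ring.
Qed.

Definition revq (q : pt K) : pt K := (rev_ord q.1.1, rev_ord q.1.2, rev_ord q.2).

Lemma phaseB (p q q0 : pt K) : phase R p q - phase R p q0 =
  2 * pi * ((q.1.1%:Z - q0.1.1%:Z)%:~R * (p.1.1%:R * hstep R K)
     + (q.1.2%:Z - q0.1.2%:Z)%:~R * (p.1.2%:R * hstep R K)
     + (q.2%:Z - q0.2%:Z)%:~R * (p.2%:R * hstep R K)).
Proof. rewrite /phase /freq !intrB /=; ring. Qed.

Lemma phaseD (p q q0 : pt K) : phase R p q + phase R p q0 =
  2 * pi * (((q.1.1 + q0.1.1)%N%:Z - (2 * K)%N%:Z)%:~R * (p.1.1%:R * hstep R K)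
     + ((q.1.2 + q0.1.2)%N%:Z - (2 * K)%N%:Z)%:~R * (p.1.2%:R * hstep R K)
     + ((q.2 + q0.2)%N%:Z - (2 * K)%N%:Z)%:~R * (p.2%:R * hstep R K)).
Proof. rewrite /phase /freq !intrB -!pmulrn; ring. Qed.

Lemma coord_diff (a a0 : 'I_(Ngrid K)) :
  (a%:Z - a0%:Z == 0) = (a == a0).
Proof. by rewrite subr_eq0 eqz_nat. Qed.

Lemma coord_sum (a a0 : 'I_(Ngrid K)) :
  ((a + a0)%N%:Z - (2 * K)%N%:Z == 0) = (a == rev_ord a0).
Proof.
rewrite subr_eq0 eqz_nat; have := ltn_ord a0; have := ltn_ord a; rewrite /Ngrid => h1 h2.
apply/eqP/eqP => [h|->]; first by apply: val_inj => /=; lia.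
by rewrite /=; lia.
Qed.

Lemma bnd_diff (a a0 : 'I_(Ngrid K)) : (`|a%:Z - a0%:Z| < Ngrid K)%N.
Proof. by have := ltn_ord a0; have := ltn_ord a; rewrite /Ngrid => h1 h2; lia. Qed.

Lemma bnd_sum (a a0 : 'I_(Ngrid K)) : (`|(a + a0)%N%:Z - (2 * K)%N%:Z| < Ngrid K)%N.
Proof. by have := ltn_ord a0; have := ltn_ord a; rewrite /Ngrid => h1 h2; lia. Qed.

Lemma orthoB (q q0 : pt K) :
  \sum_(p : pt K) expi (phase R p q - phase R p q0)
  = if q == q0 then (Nr ^+ 3)%:C else 0.
Proof.
under eq_bigr do rewrite phaseB.
rewrite sum3 ?bnd_diff // !coord_diff.
by case: q q0 => [[a b] c] [[a0 b0] c0] /=; rewrite !xpair_eqE andbA.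
Qed.

Lemma orthoD (q q0 : pt K) :
  \sum_(p : pt K) expi (phase R p q + phase R p q0)
  = if q == revq q0 then (Nr ^+ 3)%:C else 0.
Proof.
under eq_bigr do rewrite phaseD.
rewrite sum3 ?bnd_sum // !coord_sum.
by case: q q0 => [[a b] c] [[a0 b0] c0] /=; rewrite /revq /= !xpair_eqE andbA.
Qed.

Lemma sum_cosB (q q0 : pt K) :
  \sum_(p : pt K) cos (phase R p q - phase R p q0) = (q == q0)%:R * Nr ^+ 3.
Proof.
have := congr1 (@complex.Re R) (orthoB q q0); rewrite Re_sum => ->.
by case: eqP => _ /=; rewrite ?mul1r ?mul0r.
Qed.

Lemma sum_sinB (q q0 : pt K) :
  \sum_(p : pt K) sin (phase R p q - phase R p q0) = 0.
Proof.
have := congr1 (@complex.Im R) (orthoB q q0); rewrite Im_sum => ->.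
by case: eqP.
Qed.

Lemma sum_cosD (q q0 : pt K) :
  \sum_(p : pt K) cos (phase R p q + phase R p q0) = (q == revq q0)%:R * Nr ^+ 3.
Proof.
have := congr1 (@complex.Re R) (orthoD q q0); rewrite Re_sum => ->.
by case: eqP => _ /=; rewrite ?mul1r ?mul0r.
Qed.

Lemma sum_sinD (q q0 : pt K) :
  \sum_(p : pt K) sin (phase R p q + phase R p q0) = 0.
Proof.
have := congr1 (@complex.Im R) (orthoD q q0); rewrite Im_sum => ->.
by case: eqP.
Qed.

Lemma Occ (q q0 : pt K) : \sum_(p : pt K) cs p q * cs p q0
  = ((q == q0)%:R + (q == revq q0)%:R) * Nr ^+ 3 / 2.
Proof.
rewrite (eq_bigr (fun p => (cos (phase R p q - phase R p q0)
   + cos (phase R p q + phase R p q0)) / 2)); last first.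
  by move=> p _; rewrite /cs !cosD cosN sinN; field.
by rewrite -mulr_suml big_split /= sum_cosB sum_cosD; ring.
Qed.

Lemma Oss (q q0 : pt K) : \sum_(p : pt K) sn p q * sn p q0
  = ((q == q0)%:R - (q == revq q0)%:R) * Nr ^+ 3 / 2.
Proof.
rewrite (eq_bigr (fun p => (cos (phase R p q - phase R p q0)
   - cos (phase R p q + phase R p q0)) / 2)); last first.
  by move=> p _; rewrite /sn !cosD cosN sinN; field.
by rewrite -mulr_suml big_split /= sumrN sum_cosB sum_cosD; ring.
Qed.

Lemma Osc (q q0 : pt K) : \sum_(p : pt K) sn p q * cs p q0 = 0.
Proof.
rewrite (eq_bigr (fun p => (sin (phase R p q - phase R p q0)
   + sin (phase R p q + phase R p q0)) / 2)); last first.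
  by move=> p _; rewrite /sn /cs !sinD cosN sinN; field.
by rewrite -mulr_suml big_split /= sum_sinB sum_sinD; ring.
Qed.

Lemma Ocs (q q0 : pt K) : \sum_(p : pt K) cs p q * sn p q0 = 0.
Proof.
rewrite (eq_bigr (fun p => (sin (phase R p q + phase R p q0)
   - sin (phase R p q - phase R p q0)) / 2)); last first.
  by move=> p _; rewrite /sn /cs !sinD cosN sinN; field.
by rewrite -mulr_suml big_split /= sumrN sum_sinB sum_sinD; ring.
Qed.

Lemma sum_delta (F : pt K -> R) q0 : \sum_q F q * (q == q0)%:R = F q0.
Proof.
rewrite (bigD1 q0) //= eqxx mulr1 big1 ?addr0 // => q /negbTE ->.
by rewrite mulr0.
Qed.

Lemma freq_rev (j : 'I_(Ngrid K)) : freq R (rev_ord j) = - freq R j.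
Proof.
rewrite /freq /=.
have key : forall n, (n < 2 * K + 1)%N -> ((2 * K + 1 - n.+1)%N + n = 2 * K)%N.
  by move=> n hn; lia.
have := congr1 (fun n => n%:R : R) (key j (ltn_ord j)).
rewrite /= natrD natrM /Ngrid => h.
lra.
Qed.

Lemma phase_rev (p q : pt K) : phase R p (revq q) = - phase R p q.
Proof. by rewrite /phase /revq /= !freq_rev; ring. Qed.

Lemma Fc_rev f q : Fc f (revq q) = Fc f q.
Proof. by rewrite /Fc; congr (_ * _); apply: eq_bigr => p _; rewrite /cs phase_rev cosN. Qed.

Lemma Fs_rev f q : Fs f (revq q) = - Fs f q.
Proof.
rewrite /Fs -mulrN -sumrN; congr (_ * _); apply: eq_bigr => p _.
by rewrite /sn phase_rev sinN mulrN.
Qed.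

Lemma Nr3_neq0 : Nr ^+ 3 != 0.
Proof. by rewrite expf_neq0 // gt_eqF // Nr_gt0. Qed.

Section Imag.
Variable sigma : pt K -> R[i].
Hypothesis hRe : forall q, complex.Re (sigma q) = 0.
Hypothesis hodd : forall q, complex.Im (sigma (revq q)) = - complex.Im (sigma q).

Lemma Fc_mult f q0 : Fc (fmult sigma f) q0 = complex.Im (sigma q0) * Fs f q0.
Proof.
rewrite [LHS]/Fc.
under eq_bigr do rewrite fmultE mulr_suml.
rewrite exchange_big /=.
transitivity ((Nr ^+ 3)^-1 * \sum_q complex.Im (sigma q) *
   (Fs f q * \sum_p (cs p q * cs p q0) - Fc f q * \sum_p (sn p q * cs p q0))).
  congr (_ * _); apply: eq_bigr => q _.
  rewrite (eq_bigr (fun p => complex.Im (sigma q) * Fs f q * (cs p q * cs p q0)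
     - complex.Im (sigma q) * Fc f q * (sn p q * cs p q0))); last first.
    by move=> p _; rewrite hRe; ring.
  by rewrite sumrB -!mulr_sumr; ring.
under eq_bigr do rewrite Occ Osc.
rewrite (eq_bigr (fun q => (complex.Im (sigma q) * Fs f q * Nr ^+ 3 / 2) *
   ((q == q0)%:R + (q == revq q0)%:R))); last by move=> q _; ring.
under eq_bigr do rewrite mulrDr.
rewrite big_split /= !sum_delta hodd Fs_rev.
by field; rewrite gt_eqF // -/Nr Nr_gt0.
Qed.

Lemma Fs_mult f q0 : Fs (fmult sigma f) q0 = - complex.Im (sigma q0) * Fc f q0.
Proof.
rewrite [LHS]/Fs.
under eq_bigr do rewrite fmultE mulr_suml.
rewrite exchange_big /=.
transitivity ((Nr ^+ 3)^-1 * \sum_q complex.Im (sigma q) *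
   (Fs f q * \sum_p (cs p q * sn p q0) - Fc f q * \sum_p (sn p q * sn p q0))).
  congr (_ * _); apply: eq_bigr => q _.
  rewrite (eq_bigr (fun p => complex.Im (sigma q) * Fs f q * (cs p q * sn p q0)
     - complex.Im (sigma q) * Fc f q * (sn p q * sn p q0))); last first.
    by move=> p _; rewrite hRe; ring.
  by rewrite sumrB -!mulr_sumr; ring.
under eq_bigr do rewrite Ocs Oss.
rewrite (eq_bigr (fun q => (- complex.Im (sigma q) * Fc f q * Nr ^+ 3 / 2) * (q == q0)%:R
   + (complex.Im (sigma q) * Fc f q * Nr ^+ 3 / 2) * (q == revq q0)%:R)); last first.
  by move=> q _; ring.
rewrite big_split /= !sum_delta hodd Fc_rev.
by field; rewrite gt_eqF // -/Nr Nr_gt0.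
Qed.
End Imag.

Lemma Fc_lin (a b : R) (f g : grid R K) q : Fc (fun p => a * f p + b * g p) q = a * Fc f q + b * Fc g q.
Proof.
rewrite /Fc (eq_bigr (fun p => a * (f p * cs p q) + b * (g p * cs p q))).
  by rewrite big_split /= -!mulr_sumr; ring.
by move=> p _; ring.
Qed.

Lemma Fs_lin (a b : R) (f g : grid R K) q : Fs (fun p => a * f p + b * g p) q = a * Fs f q + b * Fs g q.
Proof.
rewrite /Fs (eq_bigr (fun p => a * (f p * sn p q) + b * (g p * sn p q))).
  by rewrite big_split /= -!mulr_sumr; ring.
by move=> p _; ring.
Qed.

Lemma fmult_lin (sigma : pt K -> R[i]) (a b : R) (f g : grid R K) :
  fmult sigma (fun p => a * f p + b * g p)
  = (fun p => a * fmult sigma f p + b * fmult sigma g p).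
Proof.
apply: funext => p; rewrite !fmultE !mulr_sumr -big_split /=.
by apply: eq_bigr => q _; rewrite Fc_lin Fs_lin; ring.
Qed.

Lemma ip_skew (sigma : pt K -> R[i]) (f g : grid R K) : (forall q, complex.Re (sigma q) = 0) ->
  ip (fmult sigma f) g = - ip (fmult sigma g) f.
Proof.
move=> hRe; rewrite !ipE -sumrN; apply: eq_bigr => q _; rewrite hRe; ring.
Qed.

Lemma ip_real (sigma : pt K -> R[i]) (f g : grid R K) : (forall q, complex.Im (sigma q) = 0) ->
  ip (fmult sigma f) g = ip (fmult sigma g) f.
Proof.
move=> hIm; rewrite !ipE; apply: eq_bigr => q _; rewrite hIm; ring.
Qed.

Lemma ip_self_imag (sigma : pt K -> R[i]) (f : grid R K) : (forall q, complex.Re (sigma q) = 0) ->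
  (forall q, complex.Im (sigma (revq q)) = - complex.Im (sigma q)) ->
  ip (fmult sigma f) (fmult sigma f)
  = \sum_q complex.Im (sigma q) ^+ 2 * (Fc f q ^+ 2 + Fs f q ^+ 2).
Proof.
move=> hRe hodd; rewrite ipE; apply: eq_bigr => q _.
rewrite hRe Fc_mult // Fs_mult //; ring.
Qed.

Lemma ip_self_real (sigma : pt K -> R[i]) (f : grid R K) : (forall q, complex.Im (sigma q) = 0) ->
  ip (fmult sigma f) f
  = \sum_q complex.Re (sigma q) * (Fc f q ^+ 2 + Fs f q ^+ 2).
Proof.
move=> hIm; rewrite ipE; apply: eq_bigr => q _; rewrite hIm; ring.
Qed.

Definition sgx (q : pt K) : R[i] := Complex 0 (2 * pi * freq R q.1.1).
Definition sgy (q : pt K) : R[i] := Complex 0 (2 * pi * freq R q.1.2).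
Definition sgz (q : pt K) : R[i] := Complex 0 (2 * pi * freq R q.2).
Definition sgL (q : pt K) : R[i] := (- 4 * pi ^+ 2 *
     (freq R q.1.1 ^+ 2 + freq R q.1.2 ^+ 2 + freq R q.2 ^+ 2))%:C.

Lemma DxE (f : grid R K) : Dx f = fmult sgx f. Proof. by []. Qed.
Lemma DyE (f : grid R K) : Dy f = fmult sgy f. Proof. by []. Qed.
Lemma DzE (f : grid R K) : Dz f = fmult sgz f. Proof. by []. Qed.
Lemma LE (f : grid R K) : LapN f = fmult sgL f. Proof. by []. Qed.

Lemma sgx_odd q : complex.Im (sgx (revq q)) = - complex.Im (sgx q).
Proof. by rewrite /sgx /revq /= freq_rev; ring. Qed.
Lemma sgy_odd q : complex.Im (sgy (revq q)) = - complex.Im (sgy q).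
Proof. by rewrite /sgy /revq /= freq_rev; ring. Qed.
Lemma sgz_odd q : complex.Im (sgz (revq q)) = - complex.Im (sgz q).
Proof. by rewrite /sgz /revq /= freq_rev; ring. Qed.

Lemma Dx_skew (f g : grid R K) : ip (Dx f) g = - ip (Dx g) f.
Proof. exact: ip_skew. Qed.
Lemma Dy_skew (f g : grid R K) : ip (Dy f) g = - ip (Dy g) f.
Proof. exact: ip_skew. Qed.
Lemma Dz_skew (f g : grid R K) : ip (Dz f) g = - ip (Dz g) f.
Proof. exact: ip_skew. Qed.
Lemma L_sym (f g : grid R K) : ip (LapN f) g = ip (LapN g) f.
Proof. exact: ip_real. Qed.

Lemma L_neg (f : grid R K) : ip (LapN f) f <= 0.
Proof.
rewrite LE ip_self_real // -oppr_ge0 -sumrN; apply: sumr_ge0 => q _.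
rewrite /sgL /= -mulNr; apply: mulr_ge0; last by rewrite addr_ge0 ?sqr_ge0.
rewrite mulNr mulNr opprK; apply: mulr_ge0; first by apply: mulr_ge0 => //; rewrite sqr_ge0.
by rewrite !addr_ge0 ?sqr_ge0.
Qed.

Lemma vnrm2sqE (u : vgrid R K) :
  vnrm2sq u = ip u.1.1 u.1.1 + ip u.1.2 u.1.2 + ip u.2 u.2.
Proof.
by rewrite /vnrm2sq /ip /vsq -!mulrDr -!big_split /=.
Qed.

Lemma grad_link (f : grid R K) : vnrm2sq (gradN f) = - ip (LapN f) f.
Proof.
rewrite vnrm2sqE /gradN /= DxE DyE DzE LE.
rewrite (@ip_self_imag sgx f (fun q => erefl) sgx_odd).
rewrite (@ip_self_imag sgy f (fun q => erefl) sgy_odd).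
rewrite (@ip_self_imag sgz f (fun q => erefl) sgz_odd).
rewrite (@ip_self_real sgL f (fun q => erefl)).
rewrite -!big_split -sumrN /=; apply: eq_bigr => q _.
rewrite /sgx /sgy /sgz /sgL /=; ring.
Qed.
End Four.

Local Close Scope complex_scope.

Section G.
Variables (R : realType) (K : nat).
Implicit Types f g h u v : grid R K.

Lemma h3_ge0 : 0 <= hstep R K ^+ 3.
Proof. by rewrite h3E invr_ge0 exprn_ge0 // ltW // Nr_gt0. Qed.

Lemma ipC f g : ip f g = ip g f.
Proof. by rewrite /ip; congr (_ * _); apply: eq_bigr => p _; rewrite mulrC. Qed.

Lemma ip_ge0 f : 0 <= ip f f.
Proof.
rewrite /ip mulr_ge0 ?h3_ge0 //; apply: sumr_ge0 => p _.
by rewrite -expr2 sqr_ge0.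
Qed.

Lemma ip_lin (a b : R) f g h :
  ip (fun p => a * f p + b * g p) h = a * ip f h + b * ip g h.
Proof.
rewrite /ip (eq_bigr (fun p => a * (f p * h p) + b * (g p * h p))).
  by rewrite big_split /= -!mulr_sumr; ring.
by move=> p _; ring.
Qed.

Lemma ip_ext f f' g g' : f =1 f' -> g =1 g' -> ip f g = ip f' g'.
Proof. by move=> hf hg; rewrite /ip; congr (_ * _); apply: eq_bigr => p _; rewrite hf hg. Qed.

Lemma ip_sub f g h : ip (gsub f g) h = ip f h - ip g h.
Proof.
have -> : ip f h - ip g h = 1 * ip f h + (-1) * ip g h by ring.
rewrite -ip_lin.
by apply: ip_ext => // p; rewrite /gsub; ring.
Qed.

Lemma ip_add f g h : ip (gadd f g) h = ip f h + ip g h.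
Proof.
have -> : ip f h + ip g h = 1 * ip f h + 1 * ip g h by ring.
by rewrite -ip_lin; apply: ip_ext => // p; rewrite /gadd; ring.
Qed.

Lemma ip_scale c f h : ip (gscale c f) h = c * ip f h.
Proof.
have -> : c * ip f h = c * ip f h + 0 * ip f h by ring.
by rewrite -ip_lin; apply: ip_ext => // p; rewrite /gscale; ring.
Qed.

Lemma ip_subr f g h : ip h (gsub f g) = ip h f - ip h g.
Proof. by rewrite ipC ip_sub !(ipC h). Qed.
Lemma ip_addr f g h : ip h (gadd f g) = ip h f + ip h g.
Proof. by rewrite ipC ip_add !(ipC h). Qed.
Lemma ip_scaler c f h : ip h (gscale c f) = c * ip h f.
Proof. by rewrite ipC ip_scale !(ipC h). Qed.

Lemma fmult_sub (s : pt K -> R[i]) f g : fmult s (gsub f g) = gsub (fmult s f) (fmult s g).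
Proof.
have -> : gsub f g = (fun p => 1 * f p + (-1) * g p) by apply: funext => p; rewrite /gsub; ring.
by rewrite fmult_lin; apply: funext => p; rewrite /gsub; ring.
Qed.
Lemma fmult_add (s : pt K -> R[i]) f g : fmult s (gadd f g) = gadd (fmult s f) (fmult s g).
Proof.
have -> : gadd f g = (fun p => 1 * f p + 1 * g p) by apply: funext => p; rewrite /gadd; ring.
by rewrite fmult_lin; apply: funext => p; rewrite /gadd; ring.
Qed.
Lemma fmult_scale (s : pt K -> R[i]) c f : fmult s (gscale c f) = gscale c (fmult s f).
Proof.
have -> : gscale c f = (fun p => c * f p + 0 * f p) by apply: funext => p; rewrite /gscale; ring.
by rewrite fmult_lin; apply: funext => p; rewrite /gscale; ring.
Qed.

Lemma L_sub f g : LapN (gsub f g) = gsub (LapN f) (LapN g). Proof. exact: fmult_sub. Qed.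
Lemma L_add f g : LapN (gadd f g) = gadd (LapN f) (LapN g). Proof. exact: fmult_add. Qed.
Lemma L_scale c f : LapN (gscale c f) = gscale c (LapN f). Proof. exact: fmult_scale. Qed.
Lemma Dx_sub f g : Dx (gsub f g) = gsub (Dx f) (Dx g). Proof. exact: fmult_sub. Qed.
Lemma Dy_sub f g : Dy (gsub f g) = gsub (Dy f) (Dy g). Proof. exact: fmult_sub. Qed.
Lemma Dz_sub f g : Dz (gsub f g) = gsub (Dz f) (Dz g). Proof. exact: fmult_sub. Qed.

Definition Bn f := - ip (LapN f) f.

Lemma Bn_ge0 f : 0 <= Bn f.
Proof. by rewrite /Bn oppr_ge0 L_neg. Qed.

Lemma Bn_sub u v : Bn (gsub u v) = Bn u + Bn v + 2 * ip (LapN u) v.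
Proof.
rewrite /Bn L_sub ip_sub !ip_subr (L_sym v u); ring.
Qed.

Lemma Bn_addsc u v c : Bn (gadd u (gscale c v)) = Bn u - 2 * c * ip (LapN u) v + c ^+ 2 * Bn v.
Proof.
rewrite /Bn L_add L_scale ip_add !ip_addr !ip_scale !ip_scaler (L_sym v u); ring.
Qed.

Lemma nrm2sq_ip f : nrm2sq f = ip f f.
Proof. by rewrite /nrm2sq /ip; congr (_ * _); apply: eq_bigr => p _; rewrite expr2. Qed.

Lemma EN_expand (a : R) u : EN a u = vnrm4pow4 (gradN u) / 4 + a / 2 * ip u u
  + ip (LapN u) u + ip (LapN u) (LapN u) / 2.
Proof. by rewrite /EN !nrm2sq_ip grad_link; ring. Qed.


Lemma nl_point (u1 u2 u3 v1 v2 v3 : R) :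
  ((u1 ^+ 2 + u2 ^+ 2 + u3 ^+ 2) ^+ 2 - (v1 ^+ 2 + v2 ^+ 2 + v3 ^+ 2) ^+ 2) / 4
  <= (u1 - v1) * ((u1 ^+ 2 + u2 ^+ 2 + u3 ^+ 2) * u1)
   + (u2 - v2) * ((u1 ^+ 2 + u2 ^+ 2 + u3 ^+ 2) * u2)
   + (u3 - v3) * ((u1 ^+ 2 + u2 ^+ 2 + u3 ^+ 2) * u3).
Proof.
set s := u1 ^+ 2 + u2 ^+ 2 + u3 ^+ 2.
set t := v1 ^+ 2 + v2 ^+ 2 + v3 ^+ 2.
have hs : 0 <= s by rewrite /s !addr_ge0 ?sqr_ge0.
have hw : 2 * (u1 * v1 + u2 * v2 + u3 * v3) <= s + t.
  have h1 := sqr_ge0 (u1 - v1); have h2 := sqr_ge0 (u2 - v2); have h3 := sqr_ge0 (u3 - v3).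
  rewrite /s /t; nra.
have hp : 0 <= s * (s + t - 2 * (u1 * v1 + u2 * v2 + u3 * v3)).
  by apply: mulr_ge0 => //; lra.
have hq := sqr_ge0 (s - t).
have -> : (u1 - v1) * (s * u1) + (u2 - v2) * (s * u2) + (u3 - v3) * (s * u3)
   = s * s - s * (u1 * v1 + u2 * v2 + u3 * v3) by rewrite /s; ring.
nra.
Qed.

Lemma NL_ineq (x y : grid R K) : (vnrm4pow4 (gradN x) - vnrm4pow4 (gradN y)) / 4
   <= ip (nlterm x) (gsub x y).
Proof.
set V := vscale (vsq (gradN x)) (gradN x).
have E : ip (nlterm x) (gsub x y)
   = - (ip (Dx V.1.1) (gsub x y) + ip (Dy V.1.2) (gsub x y) + ip (Dz V.2) (gsub x y)).
  rewrite /ip -!mulrDr -mulrN -!big_split -sumrN; congr (_ * _).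
  by apply: eq_bigr => p _; rewrite /V /nlterm /divN /=; ring.
rewrite E Dx_skew Dy_skew Dz_skew Dx_sub Dy_sub Dz_sub.
set a1 := ip _ V.1.1; set a2 := ip _ V.1.2; set a3 := ip _ V.2.
have -> : - (- a1 - a2 - a3) = a1 + a2 + a3 by ring.
rewrite /a1 /a2 /a3 /vnrm4pow4 /ip -mulrBr -!mulrDr -sumrB -!big_split /=.
rewrite -mulrA mulr_suml; apply: ler_wpM2l; first exact: h3_ge0.
apply: ler_sum => p _.
rewrite /V /vscale /vsq /gradN /gsub /=.
exact: nl_point.
Qed.

Lemma card_pt : #|{: pt K}| = (Ngrid K ^ 3)%N.
Proof. by rewrite !card_prod !card_ord expnS expnS expn1 mulnA. Qed.

Lemma V4_ge (x : grid R K) : vnrm2sq (gradN x) ^+ 2 <= vnrm4pow4 (gradN x).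
Proof.
set s := vsq (gradN x).
set m := vnrm2sq (gradN x).
have hm : m = hstep R K ^+ 3 * \sum_p s p by [].
have H : 0 <= hstep R K ^+ 3 * \sum_p (s p - m) ^+ 2.
  by apply: mulr_ge0; [exact: h3_ge0 | apply: sumr_ge0 => p _; rewrite sqr_ge0].
rewrite (eq_bigr (fun p => s p ^+ 2 - 2 * m * s p + m ^+ 2)) in H; last by move=> p _; ring.
rewrite !big_split /= sumrN -mulr_sumr sumr_const card_pt in H.
have hN : hstep R K ^+ 3 * (m ^+ 2 *+ (Ngrid K ^ 3)%N) = m ^+ 2.
  rewrite -mulr_natr natrX h3E -/(Nr R K).
  by field; rewrite gt_eqF //; exact: Nr_gt0.
rewrite /vnrm4pow4 -/s.
have e : hstep R K ^+ 3 * (\sum_p s p ^+ 2 - 2 * m * \sum_p s p + m ^+ 2 *+ (Ngrid K ^ 3)%N)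
  = hstep R K ^+ 3 * \sum_p s p ^+ 2 - 2 * m * (hstep R K ^+ 3 * \sum_p s p)
    + hstep R K ^+ 3 * (m ^+ 2 *+ (Ngrid K ^ 3)%N) by ring.
rewrite e hN -hm in H.
lra.
Qed.

Lemma step_common (eps A dt nd Bd' Be Be' Pee U : R) :
  0 < dt -> eps ^+ 2 / 16 <= A -> 0 <= Bd' ->
  dt * U = - (3 / 2) * Be' - 1 / 2 * Pee ->
  0 <= Be + Be' + 2 * Pee ->
  0 <= Be' - 2 * (eps / 4 * dt) * nd + (eps / 4 * dt) ^+ 2 * Bd' ->
  U <= Be / (4 * dt) - 1 / 4 * (Be' / dt) - eps / 2 * nd + A * dt * Bd'.
Proof.
move=> dt0 hA hB hU F1 F2.
set P := Be' / dt; set Q := Be / dt.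
have eP : Be' = P * dt by rewrite /P; field; rewrite gt_eqF.
have eQ : Be = Q * dt by rewrite /Q; field; rewrite gt_eqF.
have -> : Be / (4 * dt) = Q / 4 by rewrite /Q; field; rewrite gt_eqF.
have h1 : U + 5 / 4 * P - Q / 4 <= 0.
  have : dt * (U + 5 / 4 * P - Q / 4) <= 0.
    have -> : dt * (U + 5 / 4 * P - Q / 4) = dt * U + 5 / 4 * (P * dt) - (Q * dt) / 4 by ring.
    rewrite -eP -eQ hU; lra.
  by rewrite pmulr_rle0.
have h2 : 0 <= P - eps / 2 * nd + eps ^+ 2 / 16 * (dt * Bd').
  have e : Be' - 2 * (eps / 4 * dt) * nd + (eps / 4 * dt) ^+ 2 * Bd'
     = dt * (P - eps / 2 * nd + eps ^+ 2 / 16 * (dt * Bd')) by rewrite eP; field.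
  by move: F2; rewrite e pmulr_rge0.
have h3 : eps ^+ 2 / 16 * (dt * Bd') <= A * (dt * Bd').
  by apply: ler_wpM2r => //; apply: mulr_ge0 => //; apply: ltW.
have -> : A * dt * Bd' = A * (dt * Bd') by ring.
lra.
Qed.

Lemma step_real1 (eps A dt G nd nLd Bd' Bd Be Be' Pee U : R) :
  0 < dt -> eps ^+ 2 / 16 <= A -> 0 <= Bd' ->
  dt * U = - (3 / 2) * Be' - 1 / 2 * Pee ->
  0 <= Be + Be' + 2 * Pee ->
  G + (1 - eps) / 2 * nd + nLd / 2 - Bd + A * dt * Bd' <= U ->
  0 <= Be' - 2 * (eps / 4 * dt) * nd + (eps / 4 * dt) ^+ 2 * Bd' ->
  2 * Bd' <= nd + nLd ->
  G + Be' / (4 * dt) + Bd' <= Be / (4 * dt) + Bd.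
Proof.
move=> dt0 hA hB hU F1 hL F2 F4.
have := step_common dt0 hA hB hU F1 F2.
have -> : Be' / (4 * dt) = (Be' / dt) / 4 by field; rewrite gt_eqF.
lra.
Qed.

Lemma step_real2 (eps A dt G nd nd0 nLd Bd' Be Be' Pee U : R) :
  0 < dt -> eps ^+ 2 / 16 <= A -> 0 <= Bd' ->
  dt * U = - (3 / 2) * Be' - 1 / 2 * Pee ->
  0 <= Be + Be' + 2 * Pee ->
  G + (1 - eps) / 2 * nd + eps / 2 * nd - eps / 2 * nd0 - Bd' + nLd / 2
    + A * dt * Bd' <= U ->
  0 <= Be' - 2 * (eps / 4 * dt) * nd + (eps / 4 * dt) ^+ 2 * Bd' ->
  2 * Bd' <= nd + nLd ->
  G + Be' / (4 * dt) + eps / 2 * nd <= Be / (4 * dt) + eps / 2 * nd0.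
Proof.
move=> dt0 hA hB hU F1 hL F2 F4.
have := step_common dt0 hA hB hU F1 F2.
have -> : Be' / (4 * dt) = (Be' / dt) / 4 by field; rewrite gt_eqF.
lra.
Qed.

Lemma ip_sub2 u v : ip (gsub u v) (gsub u v) = ip u u - 2 * ip u v + ip v v.
Proof. by rewrite ip_sub !ip_subr (ipC v u); ring. Qed.

Lemma ipL_sub2 u v : ip (LapN (gsub u v)) (gsub u v)
  = ip (LapN u) u - 2 * ip (LapN u) v + ip (LapN v) v.
Proof. by rewrite L_sub ip_sub !ip_subr (L_sym v u); ring. Qed.

Lemma ipLL_sub2 u v : ip (LapN (gsub u v)) (LapN (gsub u v))
  = ip (LapN u) (LapN u) - 2 * ip (LapN u) (LapN v) + ip (LapN v) (LapN v).
Proof. by rewrite L_sub ip_sub2. Qed.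

Lemma ip_add2 u v : ip (gadd u v) (gadd u v) = ip u u + 2 * ip u v + ip v v.
Proof. by rewrite ip_add !ip_addr (ipC v u); ring. Qed.

Lemma upper_fact (dt : R) (mu e e' d' : grid R K) :
  d' = LapN e' ->
  gscale dt mu = (fun p => 3 / 2 * e' p - 1 / 2 * e p) ->
  dt * ip mu d' = - (3 / 2) * Bn e' - 1 / 2 * ip (LapN e) e'.
Proof.
move=> hd hmu.
rewrite -ip_scale hmu.
have -> : ip (fun p => 3 / 2 * e' p - 1 / 2 * e p) d'
   = ip (fun p => 3 / 2 * e' p + (- (1 / 2)) * e p) d'.
  by apply: ip_ext => // p; ring.
rewrite ip_lin hd (ipC e') (ipC e) (L_sym e' e) /Bn; ring.
Qed.

Lemma F2_fact (c : R) (e' d' : grid R K) : d' = LapN e' ->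
  0 <= Bn e' - 2 * c * ip d' d' + c ^+ 2 * Bn d'.
Proof. by move=> hd; have := Bn_ge0 (gadd e' (gscale c d')); rewrite Bn_addsc -hd. Qed.

Lemma F4_fact (d' : grid R K) : 2 * Bn d' <= ip d' d' + ip (LapN d') (LapN d').
Proof.
have := ip_ge0 (gadd d' (LapN d')); rewrite ip_add2 (ipC d') /Bn; lra.
Qed.

Lemma mu1_split (a A dt : R) (x y z : grid R K) : mu1 a A dt x y z =
  gadd (gsub (gadd (gadd (nlterm x) (gscale a x))
     (gscale 2 (LapN (fun r => 2 * y r - z r))))
     (gscale (A * dt) (LapN (gsub x y)))) (LapN (LapN x)).
Proof. by apply: funext => p; rewrite /mu1 /gadd /gsub /gscale; ring. Qed.

Lemma mu2_split (eps A dt : R) (x y z : grid R K) : mu2 eps A dt x y z =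
  gadd (gadd (gadd (gsub (gsub (nlterm x) (gscale eps (fun r => 2 * y r - z r)))
     (gscale (A * dt) (LapN (gsub x y)))) x) (gscale 2 (LapN x))) (LapN (LapN x)).
Proof. by apply: funext => p; rewrite /mu2 /gadd /gsub /gscale; ring. Qed.

Lemma w_split (x y z : grid R K) :
  (fun r => 2 * y r - z r) = gadd (gsub x (gsub x y)) (gsub y z).
Proof. by apply: funext => p; rewrite /gadd /gsub; ring. Qed.

Lemma step1 (eps A dt : R) (x y z e e' : grid R K) :
  0 < dt -> eps ^+ 2 / 16 <= A ->
  gsub y z = LapN e -> gsub x y = LapN e' ->
  gscale dt (mu1 (1 - eps) A dt x y z) = (fun p => 3 / 2 * e' p - 1 / 2 * e p) ->
  EN (1 - eps) x + Bn e' / (4 * dt) + Bn (gsub x y)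
  <= EN (1 - eps) y + Bn e / (4 * dt) + Bn (gsub y z).
Proof.
move=> dt0 hA hd hd' hmu.
have hU := upper_fact hd' hmu.
have F1 := Bn_ge0 (gsub e e'); rewrite Bn_sub in F1.
have F2 := F2_fact (eps / 4 * dt) hd'.
have F4 := F4_fact (gsub x y).
have hB := Bn_ge0 (gsub x y).
have NL := NL_ineq x y.
have F3 := Bn_ge0 (gsub (gsub y z) (gsub x y)); rewrite Bn_sub in F3.
have hy : y = gsub x (gsub x y) by apply: funext => p; rewrite /gsub; ring.
have Ey : EN (1 - eps) y = vnrm4pow4 (gradN y) / 4
   + (1 - eps) / 2 * (ip x x - 2 * ip x (gsub x y) + ip (gsub x y) (gsub x y))
   + (ip (LapN x) x - 2 * ip (LapN x) (gsub x y) + ip (LapN (gsub x y)) (gsub x y))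
   + (ip (LapN x) (LapN x) - 2 * ip (LapN x) (LapN (gsub x y))
      + ip (LapN (gsub x y)) (LapN (gsub x y))) / 2.
  rewrite EN_expand -ip_sub2 -ipL_sub2 -ipLL_sub2.
  by rewrite -!hy.
have Ex := EN_expand (1 - eps) x.
have EU : ip (mu1 (1 - eps) A dt x y z) (gsub x y) =
   ip (nlterm x) (gsub x y) + (1 - eps) * ip x (gsub x y)
   + 2 * (ip (LapN x) (gsub x y) - ip (LapN (gsub x y)) (gsub x y)
          + ip (LapN (gsub y z)) (gsub x y))
   - A * dt * ip (LapN (gsub x y)) (gsub x y)
   + ip (LapN x) (LapN (gsub x y)).
  rewrite mu1_split ip_add ip_sub !ip_add !ip_scale (w_split x) L_add L_sub ip_add ip_sub.
  by rewrite (L_sym (LapN x)); congr (_ + _); exact: ipC.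
have low : EN (1 - eps) x - EN (1 - eps) y + (1 - eps) / 2 * ip (gsub x y) (gsub x y)
   + ip (LapN (gsub x y)) (LapN (gsub x y)) / 2 - Bn (gsub y z)
   + A * dt * Bn (gsub x y) <= ip (mu1 (1 - eps) A dt x y z) (gsub x y).
  rewrite EU Ex Ey; move: F3 NL; rewrite /Bn => F3 NL; lra.
have := step_real1 dt0 hA hB hU F1 low F2 F4.
lra.
Qed.

Lemma step2 (eps A dt : R) (x y z e e' : grid R K) :
  0 < dt -> 0 <= eps -> eps ^+ 2 / 16 <= A ->
  gsub y z = LapN e -> gsub x y = LapN e' ->
  gscale dt (mu2 eps A dt x y z) = (fun p => 3 / 2 * e' p - 1 / 2 * e p) ->
  EN (1 - eps) x + Bn e' / (4 * dt) + eps / 2 * ip (gsub x y) (gsub x y)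
  <= EN (1 - eps) y + Bn e / (4 * dt) + eps / 2 * ip (gsub y z) (gsub y z).
Proof.
move=> dt0 heps hA hd hd' hmu.
have hU := upper_fact hd' hmu.
have F1 := Bn_ge0 (gsub e e'); rewrite Bn_sub in F1.
have F2 := F2_fact (eps / 4 * dt) hd'.
have F4 := F4_fact (gsub x y).
have hB := Bn_ge0 (gsub x y).
have NL := NL_ineq x y.
have F6 : 0 <= eps * (ip (gsub y z) (gsub y z) - 2 * ip (gsub y z) (gsub x y)
                      + ip (gsub x y) (gsub x y)).
  by apply: mulr_ge0 => //; rewrite -ip_sub2 ip_ge0.
have hy : y = gsub x (gsub x y) by apply: funext => p; rewrite /gsub; ring.
have Ey : EN (1 - eps) y = vnrm4pow4 (gradN y) / 4
   + (1 - eps) / 2 * (ip x x - 2 * ip x (gsub x y) + ip (gsub x y) (gsub x y))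
   + (ip (LapN x) x - 2 * ip (LapN x) (gsub x y) + ip (LapN (gsub x y)) (gsub x y))
   + (ip (LapN x) (LapN x) - 2 * ip (LapN x) (LapN (gsub x y))
      + ip (LapN (gsub x y)) (LapN (gsub x y))) / 2.
  rewrite EN_expand -ip_sub2 -ipL_sub2 -ipLL_sub2.
  by rewrite -!hy.
have Ex := EN_expand (1 - eps) x.
have EU : ip (mu2 eps A dt x y z) (gsub x y) =
   ip (nlterm x) (gsub x y)
   - eps * (ip x (gsub x y) - ip (gsub x y) (gsub x y) + ip (gsub y z) (gsub x y))
   - A * dt * ip (LapN (gsub x y)) (gsub x y)
   + ip x (gsub x y) + 2 * ip (LapN x) (gsub x y)
   + ip (LapN x) (LapN (gsub x y)).
  rewrite mu2_split ip_add ip_add ip_add ip_sub ip_sub !ip_scale (w_split x) ip_add ip_sub.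
  by rewrite (L_sym (LapN x)); congr (_ + _); exact: ipC.
have low : EN (1 - eps) x - EN (1 - eps) y + (1 - eps) / 2 * ip (gsub x y) (gsub x y)
   + eps / 2 * ip (gsub x y) (gsub x y) - eps / 2 * ip (gsub y z) (gsub y z)
   - Bn (gsub x y) + ip (LapN (gsub x y)) (LapN (gsub x y)) / 2
   + A * dt * Bn (gsub x y) <= ip (mu2 eps A dt x y z) (gsub x y).
  rewrite EU Ex Ey; move: NL; rewrite /Bn => NL; lra.
have := step_real2 dt0 hA hB hU F1 low F2 F4.
lra.
Qed.

Lemma coerc (eps C0 : R) (x : grid R K) : 0 < eps < 1 -> EN (1 - eps) x <= C0 ->
  H2norm x <= Num.sqrt ((`|C0| + 4) * (2 / (1 - eps) + 3)).
Proof.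
move=> /andP[e0 e1] hE; rewrite /H2norm; apply: ler_wsqrtr.
have hX := ip_ge0 x; have hLL := ip_ge0 (LapN x).
have hb : 0 <= vnrm2sq (gradN x) by rewrite grad_link oppr_ge0 L_neg.
have hV := V4_ge x.
move: hE; rewrite /EN !nrm2sq_ip => hE.
set bb := vnrm2sq (gradN x) in hb hV hE *.
set X := ip x x in hX hE *; set LL := ip (LapN x) (LapN x) in hLL hE *.
have ha : 0 < 1 - eps by lra.
have haX : 0 <= (1 - eps) * X by apply: mulr_ge0 => //; lra.
have hsq := sqr_ge0 (bb - 4).
have h1 : bb + (1 - eps) / 2 * X + LL / 2 <= C0 + 4 by lra.
have hX2 : X <= 2 * (C0 + 4) / (1 - eps).
  by rewrite ler_pdivlMr //; lra.
have hC : C0 + 4 <= `|C0| + 4 by rewrite lerD2r ler_norm.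
have hC0 : 0 <= C0 + 4 by lra.
have hpos : 0 <= 2 / (1 - eps) + 3 by rewrite addr_ge0 // divr_ge0 // ltW.
apply: (@le_trans _ _ ((C0 + 4) * (2 / (1 - eps) + 3))); last first.
  by apply: ler_wpM2r.
have -> : (C0 + 4) * (2 / (1 - eps) + 3) = 2 * (C0 + 4) / (1 - eps) + 3 * (C0 + 4).
  by field; rewrite gt_eqF.
lra.
Qed.

Lemma Bn_scale c (f : grid R K) : Bn (gscale c f) = c ^+ 2 * Bn f.
Proof. by rewrite /Bn L_scale ip_scale ip_scaler; ring. Qed.
End G.

Unset Implicit Arguments.

Theorem corollary3p1 (R : realType) (eps A : R) (b : bool) (C0 : R) :
  0 < eps < 1 -> eps ^+ 2 / 16 <= A ->
  exists C1 : R, 0 < C1 /\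
  forall (K : nat) (dt : R) (psi : nat -> grid R K),
    0 < dt ->
    let a := 1 - eps in
    let mu := mu0 a (psi 1%N) in
    psi 0%N = (fun p => psi 1%N p - dt * LapN (mu) p) ->
    (forall k : nat,
       (fun p => (3 / 2 * psi k.+2 p - 2 * psi k.+1 p + 1 / 2 * psi k p) / dt)
       = LapN (if b then mu1 a A dt (psi k.+2) (psi k.+1) (psi k)
               else mu2 eps A dt (psi k.+2) (psi k.+1) (psi k))) ->
    (if b then
       EN a (psi 1%N) + dt / 4 * vnrm2sq (gradN mu)
       + dt ^+ 2 * vnrm2sq (gradN (LapN mu)) <= C0
     else
       EN a (psi 1%N) + dt / 4 * vnrm2sq (gradN mu)
       + eps * dt ^+ 2 / 2 * nrm2sq (LapN mu) <= C0) ->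
    forall m : nat, (1 <= m)%N -> H2norm (psi m.+1) <= C1.
Proof.
move=> heps hA; have /andP[e0 e1] := heps.
exists (Num.sqrt ((`|C0| + 4) * (2 / (1 - eps) + 3)) + 1); split.
  by apply: ltr_wpDl; [exact: sqrtr_ge0 | exact: ltr01].
move=> K dt psi dt0 a mu Hpsi0 Hsch Hinit m hm.
suff Eb : EN a (psi m.+1) <= C0 by have := coerc heps Eb; lra.
pose mus k := if b then mu1 a A dt (psi k.+2) (psi k.+1) (psi k)
              else mu2 eps A dt (psi k.+2) (psi k.+1) (psi k).
pose eta := fix eta k := match k with
  | 0%N => gscale dt mu
  | k'.+1 => fun p => 2 / 3 * (dt * mus k' p + 1 / 2 * eta k' p) end.
have hd : forall k, gsub (psi k.+1) (psi k) = LapN (eta k).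
  elim=> [|k IH].
    rewrite /= L_scale; apply: funext => p.
    by rewrite /gsub /gscale Hpsi0; ring.
  have -> : eta k.+1 = (fun p => (2 / 3 * dt) * mus k p + (1 / 3) * eta k p).
    by apply: funext => p /=; field.
  rewrite LE fmult_lin -LE -LE -IH; apply: funext => p.
  have := congr1 (fun f => f p) (Hsch k) => /= hs.
  by rewrite /mus -hs /gsub; field; rewrite gt_eqF.
have hmu : forall k, gscale dt (mus k)
    = (fun p => 3 / 2 * eta k.+1 p - 1 / 2 * eta k p).
  by move=> j; apply: funext => p /=; rewrite /gscale; field.
pose T k := if b then Bn (gsub (psi k.+1) (psi k))
   else eps / 2 * ip (gsub (psi k.+1) (psi k)) (gsub (psi k.+1) (psi k)).
pose F k := EN a (psi k.+1) + Bn (eta k) / (4 * dt) + T k.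
have key : forall (bb : bool) (x y z e e' : grid R K),
   gsub y z = LapN e -> gsub x y = LapN e' ->
   gscale dt (if bb then mu1 a A dt x y z else mu2 eps A dt x y z)
     = (fun p => 3 / 2 * e' p - 1 / 2 * e p) ->
   EN a x + Bn e' / (4 * dt) + (if bb then Bn (gsub x y) else eps / 2 * ip (gsub x y) (gsub x y))
   <= EN a y + Bn e / (4 * dt) + (if bb then Bn (gsub y z) else eps / 2 * ip (gsub y z) (gsub y z)).
  case=> x y z e e' h1 h2 h3.
    exact: step1 dt0 hA h1 h2 h3.
  by apply: step2 dt0 _ hA h1 h2 h3; apply: ltW.
have mono : forall k, F k.+1 <= F k.
  by move=> j; exact: (key b _ _ _ _ _ (hd j) (hd j.+1) (hmu j)).
have F0 : F 0%N <= C0.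
  rewrite /F /T hd /= Bn_scale L_scale Bn_scale ip_scale ip_scaler -nrm2sq_ip.
  rewrite /Bn -!grad_link.
  have -> : dt ^+ 2 * vnrm2sq (gradN mu) / (4 * dt) = dt / 4 * vnrm2sq (gradN mu).
    by field; rewrite gt_eqF.
  move: Hinit; case: (b) => H.
    by apply: le_trans H; rewrite /mu; lra.
  by apply: le_trans H; rewrite /mu; lra.
have Fk : forall k, F k <= C0.
  elim=> [|j IH] //; exact: le_trans (mono j) IH.
apply: le_trans (Fk m); rewrite /F.
have h1 : 0 <= Bn (eta m) / (4 * dt) by apply: divr_ge0; [exact: Bn_ge0 | lra].
have h2 : 0 <= T m.
  rewrite /T; case: (b); first exact: Bn_ge0.
  by apply: mulr_ge0; [lra | exact: ip_ge0].
lra.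
Qed.
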